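(* Assume the setting in the context (deterministic $\Phi$ with $\operatorname{rank}(\widehat\Phi_1)=k$). Let $\theta_1\le\dots\le\theta_k$ be the principal angles between $\mathcal R(Q)$ and $\mathcal R(U_k)$, and $\varphi_1\le\dots\le\varphi_k$ the principal angles between $\mathcal R(P)$ and $\mathcal R(V_k)$. Then for $i=1,\dots,k$, $$\sin\theta_i\le\frac{\delta_i^{2q+2}\|\widehat\Phi_2\widehat\Phi_1^\dagger\|_2}{\sqrt{1+\delta_i^{4q+4}\|\widehat\Phi_2\widehat\Phi_1^\dagger\|_2^2}},\qquad \sin\varphi_i\le\frac{\delta_i^{2q+1}\|\widehat\Phi_2\widehat\Phi_1^\dagger\|_2}{\sqrt{1+\delta_i^{4q+2}\|\widehat\Phi_2\widehat\Phi_1^\dagger\|_2^2}}.$$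
   Context: Let $A\in\mathbb R^{m\times n}$ with $m\ge n$ have full SVD $A=U\Sigma V^T$, with singular values $\sigma_1\ge\sigma_2\ge\dots\ge\sigma_n\ge 0$. Fix an integer $k\ge1$ with $\sigma_k>0$ (the paper regards $A$ as having numerical rank $k$, i.e. $\sigma_k$ well separated from $\sigma_{k+1}$). Write $U=[U_k\ U_\perp]$ with $U_k\in\mathbb R^{m\times k}$ the first $k$ left singular vectors $u_1,\dots,u_k$, $U_\perp\in\mathbb R^{m\times(m-k)}$ the rest; $V=[V_k\ V_\perp]$ with $V_k\in\mathbb R^{n\times k}$ the first $k$ right singular vectors $v_1,\dots,v_k$; $\Sigma_k=\mathrm{diag}(\sigma_1,\dots,\sigma_k)$ and $\Sigma_\perp$ the remaining diagonal block of $\Sigma$ containing $\sigma_{k+1},\dots,\sigma_n$ (so $\|\Sigma_\perp\|_2=\sigma_{k+1}$, $\|\Sigma_\perp\|_F=(\sum_{i>k}\sigma_i^2)^{1/2}$). The notation $\|\cdot\|_{2,F}$ means the statement holds for both the spectral and Frobenius norm. Let $p\ge1$ be an oversampling integer, $d=k+p<n$, and $q\ge0$ an integer (power-iteration parameter). RU-QLP (Randomized Unpivoted QLP): given $\Phi\in\mathbb R^{m\times d}$, let $\bar P\in\mathbb R^{n\times d}$ have orthonormal columns spanning the range of $(A^TA)^qA^T\Phi$ (assumed of rank $d$); compute the thin unpivoted QR factorization $A\bar P=QR$ with $Q\in\mathbb R^{m\times d}$ having orthonormal columns and $R\in\mathbb R^{d\times d}$ upper triangular; compute the thin unpivoted QR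 factorization $R^T=\widetilde P\widetilde R$; set $P=\bar P\widetilde P\in\mathbb R^{n\times d}$ and $L=\widetilde R^T$ (lower triangular), giving $\hat A=QLP^T$. Partition $R=\begin{bmatrix}R_{11}&R_{12}\\0&R_{22}\end{bmatrix}$ and $L=\begin{bmatrix}L_{11}&0\\L_{21}&L_{22}\end{bmatrix}$ with $R_{11},L_{11}\in\mathbb R^{k\times k}$. Define $\widehat\Phi_1=U_k^T\Phi\in\mathbb R^{k\times d}$ and $\widehat\Phi_2=U_\perp^T\Phi\in\mathbb R^{(m-k)\times d}$, assume $\widehat\Phi_1$ has rank $k$, and let $\dagger$ denote the Moore–Penrose inverse. Set $\delta_i=\sigma_{k+1}/\sigma_i$ for $i=1,\dots,k$ and $\gamma=\sigma_n/\sigma_1$. Principal angles between a subspace $\mathcal X$ and a $k$-dimensional subspace $\mathcal Y$ (with $\dim\mathcal X\ge k$) are the $k$ canonical angles $0\le\alpha_1\le\dots\le\alpha_k\le\pi/2$; for orthonormal bases $X$, $Y$, the values $\sin\alpha_i$ are the singular values of $(I-XX^T)Y$. *)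

(* Defs.v *)
From HB Require Import structures.
From mathcomp Require Import all_boot all_order all_algebra.
From mathcomp Require Import boolp classical_sets reals.
Set Implicit Arguments. Unset Strict Implicit. Unset Printing Implicit Defensive.
Import Order.TTheory GRing.Theory Num.Theory.
Local Open Scope ring_scope.
Local Open Scope classical_set_scope.

Section Defs.
Variable R : realType.

(* entry (i,j) of M (0-based nat indices), 0 when out of range *)
Definition mxentry (a b : nat) (M : 'M[R]_(a, b)) (i j : nat) : R :=
  match (insub i : option 'I_a), (insub j : option 'I_b) with
  | Some i', Some j' => M i' j'
  | _, _ => 0
  end.

(* s_j for a nat index j (0-based), 0 when out of range *)
Definition at_nat (b : nat) (s : 'I_b -> R) (j : nat) : R :=
  match (insub j : option 'I_b) with Some j' => s j' | None => 0 end.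

Definition lcols (a b : nat) (M : 'M[R]_(a, b)) (k : nat) : 'M[R]_(a, k) :=
  \matrix_(i < a, j < k) mxentry M i j.
Definition rcols (a b : nat) (M : 'M[R]_(a, b)) (k : nat) : 'M[R]_(a, b - k) :=
  \matrix_(i < a, j < b - k) mxentry M i (k + j).

Definition rdiag (a b : nat) (s : 'I_b -> R) : 'M[R]_(a, b) :=
  \matrix_(i < a, j < b) (if (i : nat) == j then s j else 0).

Definition orthonormal_cols (a b : nat) (M : 'M[R]_(a, b)) : Prop :=
  M^T *m M = 1%:M.

Definition upper_triangular (b : nat) (M : 'M[R]_b) : Prop :=
  is_trig_mx M^T.

(* column space of M equals column space of N *)
Definition same_range (a b c : nat) (M : 'M[R]_(a, b)) (N : 'M[R]_(a, c)) : Prop :=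
  (M^T == N^T)%MS.

(* s (in some order) are the singular values of M : M = W * diag(s) * Z^T
   with W, Z orthogonal and s >= 0 (this is an SVD of M). *)
Definition is_svals (a b : nat) (M : 'M[R]_(a, b)) (s : 'I_b -> R) : Prop :=
  exists (W : 'M[R]_a) (Z : 'M[R]_b),
    [/\ W^T *m W = 1%:M, Z^T *m Z = 1%:M, (forall j, 0 <= s j) &
        M = W *m rdiag a s *m Z^T].

(* Principal angles between range(X) (X orthonormal basis, dim >= k) and
   range(Y) (Y orthonormal basis, dim k): s i = sin(alpha_(i+1)), where
   alpha_1 <= ... <= alpha_k in [0, pi/2]; so s is nondecreasing and is
   the list of singular values of (I - X X^T) Y. *)
Definition principal_sines (a c k : nat) (X : 'M[R]_(a, c)) (Y : 'M[R]_(a, k))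
    (s : 'I_k -> R) : Prop :=
  (forall i j : 'I_k, (i <= j)%N -> s i <= s j) /\
  is_svals ((1%:M - X *m X^T) *m Y) s.

Definition vnorm (b : nat) (x : 'cV[R]_b) : R := Num.sqrt (\sum_i x i 0 ^+ 2).

Definition norm2 (a b : nat) (M : 'M[R]_(a, b)) : R :=
  sup [set y | exists x : 'cV[R]_b, vnorm x = 1 /\ y = vnorm (M *m x)].

Definition penrose (a b : nat) (M : 'M[R]_(a, b)) (X : 'M[R]_(b, a)) : Prop :=
  [/\ M *m X *m M = M, X *m M *m X = X, (M *m X)^T = M *m X & (X *m M)^T = X *m M].

Definition mpinv (a b : nat) (M : 'M[R]_(a, b)) : 'M[R]_(b, a) :=
  xget 0 [set X | penrose M X].

Definition angle_bound (t c : R) : R := t * c / Num.sqrt (1 + t ^+ 2 * c ^+ 2).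

End Defs.

(* Main.v *)
Set Warnings "-all".
Require Import Defs.
From HB Require Import structures.
From mathcomp Require Import all_boot all_order all_algebra.
From mathcomp Require Import boolp classical_sets reals.
From mathcomp Require Import lra ring.
Import Order.TTheory GRing.Theory Num.Theory.
Set Implicit Arguments. Unset Strict Implicit.
Local Open Scope ring_scope.

Definition sqn (R : realType) (b : nat) (v : 'cV[R]_b) : R := \sum_i v i 0 ^+ 2.

Lemma sqn_ge0 (R : realType) b (v : 'cV[R]_b) : 0 <= sqn v.
Proof. by apply: sumr_ge0 => i _; rewrite sqr_ge0. Qed.

Lemma sqn_tr (R : realType) b (v : 'cV[R]_b) : sqn v = (v^T *m v) 0 0.
Proof. by rewrite mxE /sqn; apply: eq_bigr => i _; rewrite mxE expr2. Qed.

Lemma trD (R : realType) a b (M N : 'M[R]_(a,b)) : (M + N)^T = M^T + N^T.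
Proof. by rewrite raddfD. Qed.
Lemma trB (R : realType) a b (M N : 'M[R]_(a,b)) : (M - N)^T = M^T - N^T.
Proof. by rewrite raddfB. Qed.

Lemma sqnD_orth (R : realType) b (v w : 'cV[R]_b) : v^T *m w = 0 ->
  sqn (v + w) = sqn v + sqn w.
Proof.
move=> h; rewrite !sqn_tr.
have h2 : w^T *m v = 0 by rewrite -(trmxK v) -trmx_mul h trmx0.
rewrite trD !mulmxDl !mulmxDr h h2 addr0 add0r mxE; done.
Qed.

Lemma sqn_orth (R : realType) a b (W : 'M[R]_(a,b)) (v : 'cV[R]_b) :
  W^T *m W = 1%:M -> sqn (W *m v) = sqn v.
Proof. by move=> h; rewrite !sqn_tr trmx_mul mulmxA -(mulmxA v^T) h mulmx1. Qed.

Lemma sqn_proj (R : realType) a d (X : 'M[R]_(a,d)) (v : 'cV[R]_a) :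
  X^T *m X = 1%:M -> sqn ((1%:M - X *m X^T) *m v) <= sqn v.
Proof.
move=> h.
have e : v = (1%:M - X *m X^T) *m v + X *m (X^T *m v).
  by rewrite mulmxBl mul1mx mulmxA subrK.
rewrite {2}e sqnD_orth ?lerDl ?sqn_ge0 //.
rewrite trmx_mul trB trmx1 trmx_mul trmxK -mulmxA mulmxBl mul1mx.
by rewrite -!mulmxA (mulmxA X^T) h mul1mx subrr mulmx0.
Qed.

Lemma mxentry_ord (R : realType) a b (M : 'M[R]_(a,b)) (i : 'I_a) (j : 'I_b) :
  mxentry M i j = M i j.
Proof. by rewrite /mxentry !valK. Qed.

Lemma at_nat_ord (R : realType) a (F : 'I_a -> R) (i : 'I_a) : at_nat F i = F i.
Proof. by rewrite /at_nat valK. Qed.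

Lemma sum_pick (R : realType) a (F : 'I_a -> R) (l : nat) :
  \sum_(s < a) (if (s : nat) == l then F s else 0) = at_nat F l.
Proof.
rewrite /at_nat; case: insubP => [s0 _ <-| hl].
  rewrite (bigD1 s0) //= eqxx big1 ?addr0 // => s hs; rewrite ifF //.
  by apply/negbTE; apply: contra hs => /eqP e; apply/eqP/val_inj.
rewrite big1 // => s _; case: eqP => // e; by rewrite -e ltn_ord in hl.
Qed.

Definition Sel (R : realType) a k (h : 'I_k -> nat) : 'M[R]_(a,k) :=
  \matrix_(r < a, j < k) ((r : nat) == h j)%:R.

Lemma mul_Sel (R : realType) c a k (h : 'I_k -> nat) (W : 'M[R]_(c,a)) i j :
  (W *m Sel R a h) i j = mxentry W i (h j).
Proof.
rewrite mxE /mxentry valK.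
rewrite (eq_bigr (fun s : 'I_a => if (s : nat) == h j then W i s else 0)).
  by rewrite sum_pick /at_nat.
by move=> s _; rewrite mxE; case: eqP => _; rewrite ?mulr1 ?mulr0.
Qed.

Lemma trSel_mul (R : realType) a k (h : 'I_k -> nat) (z : 'cV[R]_a) j :
  ((Sel R a h)^T *m z) j 0 = mxentry z (h j) 0.
Proof.
rewrite -[_ *m _]trmxK trmx_mul trmxK mxE mul_Sel.
rewrite /mxentry; case: insubP => [r _ _|]; last by [].
by rewrite (ord1 r); case: insub => // x; rewrite mxE.
Qed.

Lemma lcolsE (R : realType) a b (W : 'M[R]_(a,b)) k :
  lcols W k = W *m Sel R b (fun j : 'I_k => (j : nat)).
Proof. by apply/matrixP => i j; rewrite mul_Sel mxE. Qed.

Lemma rcolsE (R : realType) a b (W : 'M[R]_(a,b)) k :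
  rcols W k = W *m Sel R b (fun j : 'I_(b - k) => (k + j)%N).
Proof. by apply/matrixP => i j; rewrite mul_Sel mxE. Qed.

Lemma mxentry_col (R : realType) a (z : 'cV[R]_a) l :
  mxentry z l 0 = at_nat (fun s => z s 0) l.
Proof.
rewrite /mxentry /at_nat.
have -> : (insub 0%N : option 'I_1) = Some ord0 by exact: (valK ord0).
by case: insub.
Qed.

Lemma rdiag_mulE (R : realType) a b (s : 'I_b -> R) (w : 'cV[R]_b) r :
  (rdiag a s *m w) r 0 = at_nat (fun j => s j * w j 0) r.
Proof.
rewrite mxE -sum_pick; apply: eq_bigr => j _; rewrite mxE eq_sym.
by case: eqP => _; rewrite ?mul0r.
Qed.

Lemma rdiag_trmulE (R : realType) a b (s : 'I_b -> R) (z : 'cV[R]_a) r :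
  ((rdiag a s)^T *m z) r 0 = s r * mxentry z r 0.
Proof.
rewrite mxE mxentry_col -sum_pick mulr_sumr; apply: eq_bigr => j _.
by rewrite !mxE; case: eqP => _; rewrite ?mul0r ?mulr0.
Qed.

Lemma conj_pow (R : realType) n (V M : 'M[R]_n) q :
  V^T *m V = 1%:M -> (V *m M *m V^T) ^+ q = V *m M ^+ q *m V^T.
Proof.
move=> h; have h' : V *m V^T = 1%:M by apply: mulmx1C.
elim: q => [|q IH]; first by rewrite !expr0 -[1]/(1%:M) mulmx1 h'.
rewrite !exprS IH -!mulmxE !mulmxA -(mulmxA _ V^T V) h mulmx1.
by rewrite -!mulmxA.
Qed.

Lemma mxentry_widen (R : realType) a b (h : (b <= a)%N) (z : 'cV[R]_a) (r : 'I_b) :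
  mxentry z r 0 = z (widen_ord h r) 0.
Proof. by rewrite -mxentry_ord. Qed.

Lemma StS_pow (R : realType) m n (sigma : 'I_n -> R) q (w : 'cV[R]_n) :
  (n <= m)%N ->
  ((rdiag m sigma)^T *m rdiag m sigma) ^+ q *m w = \col_r (sigma r ^+ (2 * q) * w r 0).
Proof.
move=> hnm; elim: q w => [|q IH] w.
  by rewrite expr0 -[1]/(1%:M) mul1mx; apply/matrixP => i j; rewrite mxE (ord1 j) mul1r.
have hv : (rdiag m sigma)^T *m rdiag m sigma *m w = \col_r (sigma r ^+ 2 * w r 0).
  apply/matrixP => i j; rewrite (ord1 j) mxE -mulmxA rdiag_trmulE (mxentry_widen hnm).
  rewrite rdiag_mulE (at_nat_ord (fun j0 : 'I_n => sigma j0 * w j0 0)).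
  by rewrite mulrA -expr2.
rewrite exprSr -mulmxE -mulmxA hv IH; apply/matrixP => i j; rewrite !mxE.
by rewrite mulrA -exprD; congr (_ ^+ _ * _); rewrite mulnS addnC.
Qed.

Lemma TV_act (R : realType) m n (sigma : 'I_n -> R) q (v : 'cV[R]_m) (r : 'I_n) :
  (n <= m)%N ->
  (((rdiag m sigma)^T *m rdiag m sigma) ^+ q *m (rdiag m sigma)^T *m v) r 0
  = at_nat sigma r ^+ (2 * q + 1) * mxentry v r 0.
Proof.
move=> hnm; rewrite -mulmxA StS_pow // mxE rdiag_trmulE at_nat_ord.
by rewrite mulrA -exprSr addn1.
Qed.

Lemma TU_act (R : realType) m n (sigma : 'I_n -> R) q (v : 'cV[R]_m) (r : 'I_m) :
  (n <= m)%N ->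
  (rdiag m sigma *m (((rdiag m sigma)^T *m rdiag m sigma) ^+ q *m (rdiag m sigma)^T) *m v) r 0
  = at_nat sigma r ^+ (2 * q + 2) * mxentry v r 0.
Proof.
move=> hnm; rewrite -mulmxA rdiag_mulE.
rewrite /at_nat; case: insubP => [j _ hj|hr]; last by rewrite expr0n /= addn2 mul0r.
rewrite TV_act // at_nat_ord mulrA -exprS addn1 addn2.
by rewrite /mxentry hj.
Qed.

Lemma core_ineq (R : realType) (k b m i : nat) (x y u g : nat -> R) (c : R) :
  (i < k)%N -> (k <= b)%N -> (b <= m)%N ->
  (forall r, (i < r)%N -> x r = 0) ->
  0 < g i -> (forall r, (r <= i)%N -> g i <= g r) ->
  (forall r, (k <= r)%N -> 0 <= g r /\ g r <= g k) ->
  (forall r, (r < k)%N -> y r = x r / g r) ->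
  (forall r, (r < k)%N -> u r = y r) ->
  \sum_(k <= r < m) u r ^+ 2 <= c ^+ 2 * \sum_(0 <= r < k) y r ^+ 2 ->
  \sum_(0 <= r < b) ((if (r < k)%N then x r else 0)
      - (1 + (g k / g i * c) ^+ 2)^-1 * (g r * u r)) ^+ 2
   <= (g k / g i * c) ^+ 2 / (1 + (g k / g i * c) ^+ 2) * \sum_(0 <= r < k) x r ^+ 2.
Proof.
move=> hik hkb hbm hx hgi hgr hgk hy hu hc.
set t := g k / g i * c; set al := (1 + t ^+ 2)^-1.
set X := \sum_(0 <= r < k) x r ^+ 2; set Y := \sum_(0 <= r < k) y r ^+ 2.
have hX : 0 <= X by apply: sumr_ge0 => r _; rewrite sqr_ge0.
have hY : g i ^+ 2 * Y <= X.
  rewrite /Y mulr_sumr; apply: ler_sum_nat => r /andP [_ hr].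
  rewrite hy //; case: (leqP r i) => hri.
    have h1 := hgr r hri.
    have gr0 : g r != 0 by apply/negP => /eqP e; rewrite e in h1; lra.
    have e : x r / g r * g r = x r by rewrite mulfVK.
    set z := x r / g r in e *; rewrite -e.
    have : 0 <= z ^+ 2 * ((g r - g i) * (g r + g i)).
      by rewrite mulr_ge0 ?sqr_ge0 // mulr_ge0 //; lra.
    nra.
  rewrite hx // mul0r; lra.
have hgk0 : 0 <= g k by case: (hgk k (leqnn k)).
have hsplit := @big_cat_nat R 0 +%R k 0 b xpredT
  (fun r => ((if (r < k)%N then x r else 0) - al * (g r * u r)) ^+ 2) (leq0n k) hkb.
rewrite hsplit /=.
have h1 : \sum_(0 <= r < k) ((if (r < k)%N then x r else 0) - al * (g r * u r)) ^+ 2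
          = (1 - al) ^+ 2 * X.
  rewrite /X mulr_sumr; apply: eq_big_nat => r /andP [_ hr].
  rewrite hr hu // hy //; case: (leqP r i) => hri.
    have h1 := hgr r hri.
    have gr0 : g r != 0 by apply/negP => /eqP e; rewrite e in h1; lra.
    have -> : g r * (x r / g r) = x r by rewrite mulrC divfK.
    by rewrite -exprMn mulrBl mul1r mulrC.
  by rewrite hx // mul0r mulr0 mulr0 subr0 expr0n /= mulr0.
have h2 : \sum_(k <= r < b) ((if (r < k)%N then x r else 0) - al * (g r * u r)) ^+ 2
          <= al ^+ 2 * (g k ^+ 2 * (c ^+ 2 * Y)).
  have h2a : \sum_(k <= r < b) ((if (r < k)%N then x r else 0) - al * (g r * u r)) ^+ 2
     <= \sum_(k <= r < b) al ^+ 2 * (g k ^+ 2 * u r ^+ 2).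
    apply: ler_sum_nat => r /andP [hr _].
    rewrite ltnNge hr /= sub0r sqrrN.
    have [g0 gle] := hgk r hr.
    have gg : g r ^+ 2 <= g k ^+ 2 by rewrite !expr2 ler_pM.
    by rewrite !exprMn ler_wpM2l ?sqr_ge0 // ler_wpM2r ?sqr_ge0.
  have h2b : \sum_(k <= r < b) al ^+ 2 * (g k ^+ 2 * u r ^+ 2)
     = al ^+ 2 * (g k ^+ 2 * \sum_(k <= r < b) u r ^+ 2) by rewrite !mulr_sumr.
  have h2c : \sum_(k <= r < b) u r ^+ 2 <= \sum_(k <= r < m) u r ^+ 2.
    rewrite (@big_cat_nat R 0 +%R b k m xpredT (fun r => u r ^+ 2) hkb hbm) /=.
    by rewrite lerDl; apply: sumr_ge0 => r _; rewrite sqr_ge0.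
  apply: (le_trans h2a); rewrite h2b.
  apply: ler_wpM2l; first by rewrite sqr_ge0.
  apply: ler_wpM2l; first by rewrite sqr_ge0.
  exact: le_trans h2c hc.
apply: (le_trans (lerD (le_refl _) h2)).
rewrite h1.
have hal : al * (1 + t ^+ 2) = 1 by rewrite /al mulVf // gt_eqF // ltr_pwDl // sqr_ge0.
have ht : t * g i = g k * c by rewrite /t mulrAC divfK // gt_eqF.
have hgi2 : 0 < g i ^+ 2 by rewrite exprn_gt0.
have key : g k ^+ 2 * (c ^+ 2 * Y) <= t ^+ 2 * X.
  have ht2 : t ^+ 2 * g i ^+ 2 = (g k * c) ^+ 2 by rewrite -exprMn ht.
  have e1 : g i ^+ 2 * (g k ^+ 2 * (c ^+ 2 * Y)) = (g k * c) ^+ 2 * (g i ^+ 2 * Y).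
    by rewrite exprMn; ring.
  have e2 : g i ^+ 2 * (t ^+ 2 * X) = (g k * c) ^+ 2 * X by rewrite -ht2; ring.
  rewrite -(ler_pM2l hgi2) e1 e2.
  by apply: ler_wpM2l; first by rewrite sqr_ge0.
have hal0 : 0 <= al ^+ 2 by rewrite sqr_ge0.
have : al ^+ 2 * (g k ^+ 2 * (c ^+ 2 * Y)) <= al ^+ 2 * (t ^+ 2 * X) by rewrite ler_wpM2l.
have e : t ^+ 2 / (1 + t ^+ 2) = (1 - al) ^+ 2 + al ^+ 2 * t ^+ 2.
  have hn : 1 + t ^+ 2 != 0 by rewrite gt_eqF // ltr_pwDl // sqr_ge0.
  rewrite /al; field; exact: hn.
rewrite e mulrDl -mulrA; lra.
Qed.

Lemma sqn_nat (R : realType) b (v : 'cV[R]_b) :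
  sqn v = \sum_(0 <= r < b) mxentry v r 0 ^+ 2.
Proof. by rewrite big_mkord; apply: eq_bigr => r _; rewrite mxentry_col (at_nat_ord (fun s => v s 0)). Qed.

Lemma mxentry_cord (R : realType) a (z : 'cV[R]_a) (j : 'I_a) : mxentry z j 0 = z j 0.
Proof. by rewrite mxentry_col (at_nat_ord (fun s => z s 0)). Qed.

Lemma Sel_id_mul (R : realType) b k (x : 'cV[R]_k) (r : 'I_b) :
  (Sel R b (fun j : 'I_k => (j : nat)) *m x) r 0 = mxentry x r 0.
Proof.
rewrite mxE mxentry_col -sum_pick; apply: eq_bigr => j _; rewrite mxE eq_sym.
by case: eqP => _; rewrite ?mul1r ?mul0r.
Qed.

Lemma mxentry_out (R : realType) a b (M : 'M[R]_(a,b)) i j : (a <= i)%N -> mxentry M i j = 0.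
Proof. by move=> h; rewrite /mxentry; case: insubP => // r _ e; rewrite -e leqNgt ltn_ord in h. Qed.

Lemma core_mx (R : realType) b m d k (i : 'I_k) (Wm : 'M[R]_b) (X : 'M[R]_(b,d))
  (T : 'M[R]_(b,m)) (Psi : 'M[R]_(m,d)) (Y : 'M[R]_(d,k)) (g : nat -> R) (c : R) :
  (k <= b)%N -> (b <= m)%N -> Wm^T *m Wm = 1%:M -> X^T *m X = 1%:M ->
  (forall (v : 'cV[R]_m) (r : 'I_b), (T *m v) r 0 = g r * mxentry v r 0) ->
  (1%:M - X *m X^T) *m (Wm *m T *m Psi) = 0 ->
  (Sel R m (fun j : 'I_k => (j : nat)))^T *m Psi *m Y = 1%:M ->
  (forall y : 'cV[R]_k,
     sqn ((Sel R m (fun j : 'I_(m - k) => (k + j)%N))^T *m Psi *m Y *m y) <= c ^+ 2 * sqn y) ->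
  0 < g i -> (forall r, (r <= i)%N -> g i <= g r) ->
  (forall r, (k <= r)%N -> 0 <= g r /\ g r <= g k) ->
  forall x : 'cV[R]_k, (forall j : 'I_k, (i < j)%N -> x j 0 = 0) ->
  sqn ((1%:M - X *m X^T) *m (Wm *m Sel R b (fun j : 'I_k => (j : nat))) *m x)
    <= (g k / g i * c) ^+ 2 / (1 + (g k / g i * c) ^+ 2) * sqn x.
Proof.
move=> hkb hbm hW hX hT hH hY1 hG hgi hgr hgk x hx.
set y : 'cV[R]_k := \col_j (x j 0 / g j).
set u := Psi *m Y *m y.
set al := (1 + (g k / g i * c) ^+ 2)^-1.
set S1 := Sel R b (fun j : 'I_k => (j : nat)).
have hh : (1%:M - X *m X^T) *m (Wm *m T *m u) = 0.
  by rewrite /u !mulmxA -(mulmxA _ Wm) -(mulmxA _ (Wm *m T)) hH !mul0mx.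
have e1 : (1%:M - X *m X^T) *m (Wm *m S1) *m x
        = (1%:M - X *m X^T) *m (Wm *m (S1 *m x - al *: (T *m u))).
  rewrite mulmxBr mulmxBr -scalemxAr -scalemxAr (mulmxA Wm T u) hh scaler0 subr0.
  by rewrite !mulmxA.
rewrite e1; apply: (le_trans (sqn_proj _ hX)); rewrite sqn_orth //.
rewrite !sqn_nat.
set x' := fun r => mxentry x r 0.
set y' := fun r => mxentry y r 0.
set u' := fun r => mxentry u r 0.
have ex : \sum_(0 <= r < b) mxentry (S1 *m x - al *: (T *m u)) r 0 ^+ 2
   = \sum_(0 <= r < b) ((if (r < k)%N then x' r else 0) - al * (g r * u' r)) ^+ 2.
  rewrite !big_mkord; apply: eq_bigr => r _.
  rewrite mxentry_col (at_nat_ord (fun s => (S1 *m x - al *: (T *m u)) s 0)).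
  move: (Sel_id_mul (b:=b) x r) (hT u r); rewrite !mxE => -> ->; congr ((_ - _) ^+ 2).
  by rewrite /x'; case: ltnP => // hr; rewrite mxentry_out.
rewrite ex.
apply: (core_ineq (m := m) (y := y')) => //.
- move=> r hr; rewrite /x' mxentry_col /at_nat; case: insubP => // j _ e.
  by rewrite hx // e.
- move=> r hr; rewrite /y' /x' (mxentry_col y) (mxentry_col x).
  rewrite /at_nat; case: insubP => [j _ e|]; first by rewrite mxE -e.
  by rewrite hr.
- move=> r hr; rewrite /u' /y'.
  have := trSel_mul (fun j : 'I_k => (j : nat)) u (Ordinal hr).
  by rewrite /u !mulmxA hY1 mul1mx /= => <-; rewrite -mxentry_ord.
- have := hG y; rewrite !sqn_nat.
  have -> : \sum_(0 <= r < k) mxentry y r 0 ^+ 2 = \sum_(0 <= r < k) y' r ^+ 2 by [].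
  move=> h; apply: le_trans h; rewrite le_eqVlt; apply/orP; left; apply/eqP.
  rewrite -{1}(add0n k) big_addn big_mkord [in RHS]big_mkord.
  apply: eq_bigr => j _; rewrite mxentry_cord.
  have := trSel_mul (fun j : 'I_(m - k) => (k + j)%N) u j.
  by rewrite /u !mulmxA addnC => ->.
Qed.

Lemma sqn_gt0 (R : realType) b (v : 'cV[R]_b) : v != 0 -> 0 < sqn v.
Proof.
move=> hv; rewrite lt_def sqn_ge0 andbT; apply: contra hv => /eqP h.
apply/eqP/matrixP => r j; rewrite (ord1 j) mxE.
have := @psumr_eq0P R _ xpredT (fun i => v i 0 ^+ 2) (fun i _ => sqr_ge0 _) h r isT.
by move/eqP; rewrite sqrf_eq0 => /eqP.
Qed.

Lemma sv_bound (R : realType) b k (M : 'M[R]_(b,k)) (s : 'I_k -> R) (i : 'I_k) (be : R) :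
  (k <= b)%N -> (forall i j : 'I_k, (i <= j)%N -> s i <= s j) -> is_svals M s ->
  (forall x : 'cV[R]_k, (forall j : 'I_k, (i < j)%N -> x j 0 = 0) ->
     sqn (M *m x) <= be * sqn x) ->
  s i ^+ 2 <= be.
Proof.
move=> hkb hs [W [Z [hW hZ hs0 hM]]] hb.
set A : 'M[R]_k := pid_mx i.+1.
set B : 'M[R]_k := copid_mx i *m Z^T.
have rA : \rank A = i.+1 by rewrite rank_pid_mx.
have Zu : Z^T \in unitmx by case: (mulmx1_unit hZ).
have rB : \rank B = (k - i)%N.
  by rewrite mxrankMfree ?row_free_unit // rank_copid_mx // ltnW.
have hcap := mxrank_sum_cap A B.
have hle := rank_leq_col (A + B)%MS.
have hcap0 : (\rank (A :&: B)%MS != 0)%N.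
  apply/negP => /eqP h0; move: hcap; rewrite h0 addn0 rA rB addSn subnKC; last exact: ltnW.
  move=> e; move: hle; rewrite e ltnn; by [].
have : (A :&: B)%MS != 0 by rewrite -mxrank_eq0.
case/rowV0Pn => w; rewrite sub_capmx => /andP [/submxP [a ha] /submxP [a2 ha2]] hw0.
set x := w^T.
have hx : forall j : 'I_k, (i < j)%N -> x j 0 = 0.
  move=> j hj; rewrite /x mxE ha mxE big1 // => l _; rewrite /A mxE.
  case: eqP => [e|]; last by rewrite andFb mulr0.
  by rewrite /= e ltnS leqNgt hj mulr0.
set z : 'cV[R]_k := copid_mx i *m a2^T.
have hxz : x = Z *m z.
  rewrite /x ha2 !trmx_mul trmxK /z mulmxA; congr (_ *m _ *m _).
  by rewrite /copid_mx trB trmx1 tr_pid_mx.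
have hz : forall r : 'I_k, (r < i)%N -> z r 0 = 0.
  move=> r hr; rewrite /z mxE big1 // => l _; rewrite /copid_mx !mxE.
  by rewrite hr andbT subrr mul0r.
have hxn : 0 < sqn x.
  by apply: sqn_gt0; rewrite /x; apply: contra hw0 => /eqP h; rewrite -(trmxK w) h trmx0.
have hsx : sqn x = sqn z by rewrite hxz sqn_orth.
have hMx : sqn (M *m x) = sqn (rdiag b s *m z).
  by rewrite hM hxz -!mulmxA (mulmxA Z^T) hZ mul1mx sqn_orth.
have hlow : s i ^+ 2 * sqn z <= sqn (rdiag b s *m z).
  rewrite !sqn_nat mulr_sumr.
  rewrite (@big_cat_nat R 0 +%R k 0 b xpredT _ (leq0n k) hkb) /=.
  rewrite -[X in X <= _]addr0; apply: lerD; last by apply: sumr_ge0 => r _; rewrite sqr_ge0.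
  apply: ler_sum_nat => r /andP [_ hr].
  have -> : mxentry (rdiag b s *m z) r 0 = s (Ordinal hr) * z (Ordinal hr) 0.
    have hrb : (r < b)%N by apply: leq_trans hr hkb.
    rewrite (mxentry_cord _ (Ordinal hrb)) rdiag_mulE.
    by rewrite (at_nat_ord (fun j => s j * z j 0) (Ordinal hr)).
  rewrite (mxentry_cord z (Ordinal hr)) exprMn.
  case: (ltnP r i) => hri.
    rewrite hz //; lra.
  apply: ler_wpM2r; first by rewrite sqr_ge0.
  have h1 := hs i (Ordinal hr) hri.
  by rewrite !expr2 ler_pM.
have := hb x hx; rewrite hMx hsx => h2.
rewrite hsx in hxn.
by rewrite -(ler_pM2r hxn); apply: le_trans h2.
Qed.
Lemma sqnZ (R : realType) b (a : R) (v : 'cV[R]_b) : sqn (a *: v) = a ^+ 2 * sqn v.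
Proof. by rewrite /sqn mulr_sumr; apply: eq_bigr => i _; rewrite mxE exprMn. Qed.

Lemma vnormE (R : realType) b (v : 'cV[R]_b) : vnorm v = Num.sqrt (sqn v).
Proof. by []. Qed.

Lemma entry_le_sqn (R : realType) b (v : 'cV[R]_b) j : v j 0 ^+ 2 <= sqn v.
Proof.
rewrite /sqn (bigD1 j) //= lerDl; apply: sumr_ge0 => i _; exact: sqr_ge0.
Qed.

Lemma norm_le1 (R : realType) (x : R) : x ^+ 2 <= 1 -> `|x| <= 1.
Proof.
move=> h; rewrite -(real_normK (num_real x)) in h.
have h0 := normr_ge0 x; set a := `|x| in h h0 *.
case: (lerP a 1) => // ha; exfalso.
have : 1 * 1 < a * a by rewrite ltr_pM.
by rewrite mul1r -expr2 ltNge h.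
Qed.

Lemma norm2_prop (R : realType) a b (G : 'M[R]_(a,b)) : (0 < b)%N ->
  0 <= norm2 G /\ forall y, sqn (G *m y) <= norm2 G ^+ 2 * sqn y.
Proof.
move=> hb.
set E := [set y | exists x : 'cV[R]_b, vnorm x = 1 /\ y = vnorm (G *m x)]%classic.
set B := fun r : 'I_a => \sum_j `|G r j|.
set K := Num.sqrt (\sum_r B r ^+ 2).
have hE : forall y, E y -> 0 <= y /\ y <= K.
  move=> _ [x [hx ->]]; split; first exact: sqrtr_ge0.
  have sx : sqn x = 1.
    by rewrite -(sqr_sqrtr (sqn_ge0 x)) -vnormE hx expr1n.
  rewrite vnormE ler_sqrt; last by apply: sumr_ge0 => r _; rewrite sqr_ge0.
  apply: ler_sum => r _; rewrite mxE.
  have h1 : `|\sum_j G r j * x j 0| <= B r.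
    apply: (le_trans (ler_norm_sum _ _ _)); apply: ler_sum => j _.
    rewrite normrM -[X in _ <= X]mulr1 ler_wpM2l //.
    by apply: norm_le1; rewrite -sx entry_le_sqn.
  rewrite -(real_normK (num_real _)) !expr2 ler_pM //.
set e : 'cV[R]_b := delta_mx (Ordinal hb) 0.
have se : sqn e = 1.
  rewrite /sqn (bigD1 (Ordinal hb)) //= !mxE !eqxx /= expr1n big1 ?addr0 //.
  by move=> i hi; rewrite mxE (negbTE hi) /= expr2 mulr0.
have Ee : E (vnorm (G *m e)) by exists e; split => //; rewrite vnormE se sqrtr1.
have hsup : has_sup E by split; [exists (vnorm (G *m e)) | exists K => y /hE []].
have ub := sup_upper_bound hsup.
have c0 : 0 <= norm2 G.
  by apply: le_trans (ub _ Ee); case: (hE _ Ee).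
split => // y.
have [->|hy] := eqVneq y 0.
  rewrite mulmx0; have -> : sqn (0 : 'cV[R]_a) = 0.
    by rewrite /sqn big1 // => i _; rewrite mxE expr2 mulr0.
  by rewrite mulr_ge0 ?sqn_ge0 // sqr_ge0.
have sy := sqn_gt0 hy.
set n := Num.sqrt (sqn y).
have ny : 0 < n by rewrite sqrtr_gt0.
have nn : n ^+ 2 = sqn y by rewrite sqr_sqrtr // ltW.
set y' := n^-1 *: y.
have sy' : sqn y' = 1 by rewrite sqnZ exprVn nn mulVf // gt_eqF.
have Ey : E (vnorm (G *m y')) by exists y'; split => //; rewrite vnormE sy' sqrtr1.
have h1 := ub _ Ey.
have e1 : vnorm (G *m y') = n^-1 * Num.sqrt (sqn (G *m y)).
  rewrite vnormE -scalemxAr sqnZ sqrtrM ?sqr_ge0 // sqrtr_sqr ger0_norm //.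
  by rewrite invr_ge0 ltW.
rewrite e1 ler_pdivrMl // in h1.
rewrite -nn -(sqr_sqrtr (sqn_ge0 (G *m y))) -exprMn.
rewrite ler_pXn2r // ?nnegrE ?sqrtr_ge0 ?mulr_ge0 // ?(ltW ny) //.
by rewrite mulrC.
Qed.
Lemma mpinv_right (R : realType) k d (M : 'M[R]_(k,d)) :
  \rank M = k -> M *m mpinv M = 1%:M.
Proof.
move=> rk; have rf : row_free M by rewrite /row_free rk.
have hu : M *m M^T \in unitmx.
  rewrite -row_free_unit; apply: inj_row_free => v hv.
  have h0 : (v *m M) *m (v *m M)^T = 0 by rewrite trmx_mul !mulmxA -(mulmxA v) hv mul0mx.
  have h1 : v *m M = 0.
    apply/matrixP => i j; rewrite (ord1 i) [RHS]mxE.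
    have hs : (v *m M *m (v *m M)^T) 0 0 = 0 by rewrite h0 mxE.
    rewrite mxE in hs.
    have hge : forall j', true -> 0 <= (v *m M) 0 j' * (v *m M)^T j' 0.
      by move=> j' _; rewrite [X in _ * X]mxE -expr2 sqr_ge0.
    have := psumr_eq0P hge hs (i:=j) isT.
    by rewrite [X in _ * X]mxE -expr2 => /eqP; rewrite sqrf_eq0 => /eqP.
  by apply: (row_free_inj rf); rewrite h1 mul0mx.
set X0 := M^T *m invmx (M *m M^T).
have e1 : M *m X0 = 1%:M by rewrite /X0 mulmxA mulmxV.
have pX0 : penrose M X0.
  split.
  - by rewrite e1 mul1mx.
  - by rewrite -mulmxA e1 mulmx1.
  - by rewrite e1 trmx1.
  - by rewrite /X0 !trmx_mul trmx_inv trmx_mul trmxK mulmxA.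
have := xgetI 0 pX0; rewrite -/(mpinv M) => -[h _ _ _].
apply: (row_free_inj rf); by rewrite h mul1mx.
Qed.

Lemma at_nat_ge0 (R : realType) n (sigma : 'I_n -> R) r :
  (forall j, 0 <= sigma j) -> 0 <= at_nat sigma r.
Proof. by move=> h; rewrite /at_nat; case: insub. Qed.

Lemma at_nat_mono (R : realType) n (sigma : 'I_n -> R) r r' :
  (forall j, 0 <= sigma j) -> (forall i j : 'I_n, (i <= j)%N -> sigma j <= sigma i) ->
  (r <= r')%N -> at_nat sigma r' <= at_nat sigma r.
Proof.
move=> h0 hs hrr; rewrite {1}/at_nat; case: insubP => [j' _ e'|]; last by rewrite at_nat_ge0.
rewrite /at_nat; case: insubP => [j _ e|hr]; first by apply: hs; rewrite e e'.
by exfalso; move: hr; rewrite (leq_ltn_trans hrr) // -e' ltn_ord.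
Qed.

Lemma final_real (R : realType) (s t : R) :
  0 <= s -> 0 <= t -> s ^+ 2 <= t ^+ 2 / (1 + t ^+ 2) -> s <= t / Num.sqrt (1 + t ^+ 2).
Proof.
move=> hs ht h.
have h1 : 0 < 1 + t ^+ 2 by rewrite ltr_pwDl // sqr_ge0.
rewrite -(ler_pXn2r (n:=2)) //; last by rewrite nnegrE divr_ge0 ?sqrtr_ge0.
by rewrite expr_div_n sqr_sqrtr // ltW.
Qed.

Unset Implicit Arguments. Set Strict Implicit.

Theorem theorem2 (R : realType) (m n k p q : nat)
  (A : 'M[R]_(m, n)) (U : 'M[R]_m) (V : 'M[R]_n) (sigma : 'I_n -> R)
  (Phi : 'M[R]_(m, k + p)) (Pbar : 'M[R]_(n, k + p))
  (Q : 'M[R]_(m, k + p)) (Rm : 'M[R]_(k + p))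
  (Pt : 'M[R]_(k + p)) (Rt : 'M[R]_(k + p))
  (theta phi : 'I_k -> R) :
  (n <= m)%N -> (1 <= k)%N -> (1 <= p)%N -> (k + p < n)%N ->
  (* full SVD of A *)
  U^T *m U = 1%:M -> V^T *m V = 1%:M ->
  (forall j, 0 <= sigma j) ->
  (forall i j : 'I_n, (i <= j)%N -> sigma j <= sigma i) ->
  A = U *m rdiag m sigma *m V^T ->
  0 < at_nat sigma k.-1 ->
  (* RU-QLP *)
  orthonormal_cols Pbar ->
  same_range Pbar ((A^T *m A) ^+ q *m A^T *m Phi) ->
  \rank ((A^T *m A) ^+ q *m A^T *m Phi) = (k + p)%N ->
  orthonormal_cols Q -> upper_triangular Rm -> A *m Pbar = Q *m Rm ->
  orthonormal_cols Pt -> upper_triangular Rt -> Rm^T = Pt *m Rt ->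
  let P := Pbar *m Pt in
  let Phi1 := (lcols U k)^T *m Phi in
  let Phi2 := (rcols U k)^T *m Phi in
  \rank Phi1 = k ->
  principal_sines Q (lcols U k) theta ->
  principal_sines P (lcols V k) phi ->
  let c := norm2 (Phi2 *m mpinv Phi1) in
  forall i : 'I_k,
    let delta := at_nat sigma k / at_nat sigma i in
    theta i <= angle_bound (delta ^+ (2 * q + 2)) c /\
    phi i <= angle_bound (delta ^+ (2 * q + 1)) c.
Proof.
move=> hnm hk1 hp1 hkpn hU hV hs0 hsort hA hsk hPbar hrange hrank hQ hRm hAPQ
  hPt hRt hRR P Phi1 Phi2 hr1 hth hph c i delta.
rewrite /orthonormal_cols in hPbar hQ hPt.
have hkn : (k <= n)%N by apply: leq_trans (ltnW hkpn); rewrite leq_addr.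
have hkm : (k <= m)%N by apply: leq_trans hnm.
set S := rdiag m sigma.
set TV := (S^T *m S) ^+ q *m S^T.
set TU := S *m TV.
set Psi := U^T *m Phi.
set N := (A^T *m A) ^+ q *m A^T *m Phi.
have hAt : A^T = V *m S^T *m U^T by rewrite hA !trmx_mul trmxK mulmxA.
have hAA : A^T *m A = V *m (S^T *m S) *m V^T.
  rewrite hAt hA -!mulmxA (mulmxA U^T) hU mul1mx.
  by rewrite !mulmxA.
have hN : N = V *m TV *m Psi.
  rewrite /N hAA conj_pow // hAt /TV /Psi -!mulmxA (mulmxA V^T) hV mul1mx.
  by rewrite !mulmxA.
have hAN : A *m N = U *m TU *m Psi.
  rewrite hN hA /TU -!mulmxA (mulmxA V^T) hV mul1mx.
  by rewrite !mulmxA.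
have [D hD] : exists D : 'M[R]_(k + p, k + p), N = Pbar *m D.
  move: hrange; rewrite /same_range -/N => /andP [_ /submxP [D0 hD0]].
  by exists D0^T; rewrite -(trmxK N) hD0 trmx_mul trmxK.
have hQQ : (1%:M - Q *m Q^T) *m (U *m TU *m Psi) = 0.
  have e : A *m N = Q *m (Rm *m D) by rewrite hD mulmxA hAPQ -mulmxA.
  rewrite -hAN e !mulmxA mulmxBl mul1mx -(mulmxA Q Q^T Q) hQ mulmx1 subrr.
  by rewrite !mul0mx.
have hPtt : Pt *m Pt^T = 1%:M by apply: mulmx1C.
have hP : P^T *m P = 1%:M.
  by rewrite /P trmx_mul -mulmxA (mulmxA Pbar^T) hPbar mul1mx.
have hPP : P *m P^T = Pbar *m Pbar^T.
  by rewrite /P trmx_mul -mulmxA (mulmxA Pt) hPtt mul1mx.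
have hPN : (1%:M - P *m P^T) *m (V *m TV *m Psi) = 0.
  rewrite -hN hD hPP mulmxA mulmxBl mul1mx -(mulmxA Pbar Pbar^T) hPbar mulmx1 subrr.
  by rewrite mul0mx.
set Y := mpinv Phi1.
have hPhi1 : Phi1 = (Sel R m (fun j : 'I_k => (j : nat)))^T *m Psi.
  by rewrite /Phi1 lcolsE trmx_mul mulmxA.
have hPhi2 : Phi2 = (Sel R m (fun j : 'I_(m - k) => (k + j)%N))^T *m Psi.
  by rewrite /Phi2 rcolsE trmx_mul mulmxA.
have hY1 : (Sel R m (fun j : 'I_k => (j : nat)))^T *m Psi *m Y = 1%:M.
  by rewrite -hPhi1 /Y mpinv_right.
have [c0 hc] := norm2_prop (Phi2 *m Y) hk1.
have hG : forall y : 'cV[R]_k,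
   sqn ((Sel R m (fun j : 'I_(m - k) => (k + j)%N))^T *m Psi *m Y *m y) <= c ^+ 2 * sqn y.
  by move=> y; rewrite -hPhi2; apply: hc.
have hik : (i <= k.-1)%N by rewrite -ltnS prednK.
have si0 : 0 < at_nat sigma i.
  by apply: (lt_le_trans hsk); apply: at_nat_mono.
have sk0 : 0 <= at_nat sigma k by apply: at_nat_ge0.
have hgen : forall e : nat,
   [/\ 0 < at_nat sigma i ^+ e,
       (forall r, (r <= i)%N -> at_nat sigma i ^+ e <= at_nat sigma r ^+ e) &
       (forall r, (k <= r)%N -> 0 <= at_nat sigma r ^+ e /\ at_nat sigma r ^+ e <= at_nat sigma k ^+ e)].
  move=> e; case: e => [|e].
    by rewrite !expr0; split => [|r _|r _]; rewrite ?ltr01 ?lexx ?ler01.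
  split; first exact: exprn_gt0.
    move=> r hr; rewrite ler_pXn2r ?nnegrE ?at_nat_ge0 ?(ltW si0) //.
    exact: at_nat_mono.
  move=> r hr; split; first by apply: exprn_ge0; apply: at_nat_ge0.
  rewrite ler_pXn2r ?nnegrE ?at_nat_ge0 //; exact: at_nat_mono.
have hdel : forall e, delta ^+ e * c = at_nat sigma k ^+ e / at_nat sigma i ^+ e * c.
  by move=> e; rewrite /delta expr_div_n.
have hdel0 : forall e, 0 <= delta ^+ e * c.
  move=> e; apply: mulr_ge0 => //; apply: exprn_ge0; apply: divr_ge0 => //; exact: ltW.
have hab : forall e, angle_bound (delta ^+ e) c
   = (delta ^+ e * c) / Num.sqrt (1 + (delta ^+ e * c) ^+ 2).
  by move=> e; rewrite /angle_bound -exprMn.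
split.
- case: hth => hthm hthsv.
  have [g1 g2 g3] := hgen (2 * q + 2)%N.
  have H := sv_bound (i := i)
    (be := (at_nat sigma k ^+ (2 * q + 2) / at_nat sigma i ^+ (2 * q + 2) * c) ^+ 2 /
          (1 + (at_nat sigma k ^+ (2 * q + 2) / at_nat sigma i ^+ (2 * q + 2) * c) ^+ 2)) hkm hthm hthsv.
  rewrite hab; apply: final_real; first by case: hthsv => W [Z [_ _ h _]].
    exact: hdel0.
  rewrite hdel; apply: H => x hx; rewrite lcolsE.
  apply: (core_mx (g := fun r => at_nat sigma r ^+ (2 * q + 2)) (T := TU) (Psi := Psi)
            (Y := Y) hkm (leqnn m) hU hQ _ hQQ hY1 hG g1 g2 g3 hx).
  by move=> v r; rewrite /TU /TV /S TU_act.
- case: hph => hphm hphsv.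
  have [g1 g2 g3] := hgen (2 * q + 1)%N.
  have H := sv_bound (i := i)
    (be := (at_nat sigma k ^+ (2 * q + 1) / at_nat sigma i ^+ (2 * q + 1) * c) ^+ 2 /
          (1 + (at_nat sigma k ^+ (2 * q + 1) / at_nat sigma i ^+ (2 * q + 1) * c) ^+ 2)) hkn hphm hphsv.
  rewrite hab; apply: final_real; first by case: hphsv => W [Z [_ _ h _]].
    exact: hdel0.
  rewrite hdel; apply: H => x hx; rewrite lcolsE.
  apply: (core_mx (g := fun r => at_nat sigma r ^+ (2 * q + 1)) (T := TV) (Psi := Psi)
            (Y := Y) hkn hnm hV hP _ hPN hY1 hG g1 g2 g3 hx).
  by move=> v r; rewrite /TV /S TV_act // at_nat_ord.
Qed.
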